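(* Let $\Phi=(G,\varphi)$ be a complex unit gain graph and let $v$ be a vertex lying on a cycle of $G$. (i) If $r(\Phi)=r(G)-2\theta(G)$, then $r(\Phi)=r(\Phi-v)$, $r(G-v)=r(G)-2$ and $\theta(G)=\theta(G-v)+1$. (ii) If $r(\Phi)=r(G)+2\theta(G)$, then $r(\Phi)=r(\Phi-v)+2$, $r(G-v)=r(G)$ and $\theta(G)=\theta(G-v)+1$. (iii) If $r(\Phi)=r(G)-2\theta(G)$ (respectively $r(\Phi)=r(G)+2\theta(G)$), then $r(\Phi-v)=r(G-v)-2\theta(G-v)$ (respectively $r(\Phi-v)=r(G-v)+2\theta(G-v)$), $v$ lies on exactly one cycle of $G$, and $v$ is not a quasi-pendant vertex of $G$.
   Context: A complex unit gain graph $\Phi=(G,\varphi)$ consists of a finite simple graph $G$ with vertex set $\{v_1,\dots,v_n\}$ and a gain function $\varphi$ assigning to each oriented edge $e_{ij}$ ($v_iv_j\in E(G)$) a complex number of modulus $1$ with $\varphi(e_{ji})=\overline{\varphi(e_{ij})}$. $A(\Phi)$ is the Hermitian matrix with $(i,j)$ entry $\varphi(e_{ij})$ if $v_iv_j\in E(G)$ and $0$ otherwise; $r(\Phi)$ is its rank; $r(\cdot)$ of a simple graph is the rank of its $0$-$1$ adjacency matrix. $\Phi-v$ is the induced gain subgraph obtained by deleting $v$ and its incident edges (with underlying graph $G-v$). $\theta(G)=|E(G)|-|V(G)|+\omega(G)$, $\omega(G)$ the number of components. A quasi-pendant vertex is a vertex adjacent to a vertex of degree $1$. *)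

(* Defs.v *)
From HB Require Import structures.
From mathcomp Require Import all_boot all_order all_algebra.
From mathcomp Require Import complex.
From mathcomp Require Import reals.
Set Implicit Arguments. Unset Strict Implicit. Unset Printing Implicit Defensive.
Import Order.TTheory GRing.Theory Num.Theory.
Local Open Scope ring_scope.

(* A simple graph on a finite vertex type V is a symmetric irreflexive rel V. *)

Section GainGraphs.
Variable R : realType.
Variable V : finType.

Definition gain_mx (adj : rel V) (phi : V -> V -> R[i]) : 'M[R[i]]_#|V| :=
  \matrix_(i, j) (if adj (enum_val i) (enum_val j)
                  then phi (enum_val i) (enum_val j) else 0).

Definition gain_rank (adj : rel V) (phi : V -> V -> R[i]) : nat :=
  \rank (gain_mx adj phi).
End GainGraphs.

Definition adj01_mx (V : finType) (adj : rel V) : 'M[rat]_#|V| :=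
  \matrix_(i, j) (adj (enum_val i) (enum_val j))%:R.

Definition graph_rank (V : finType) (adj : rel V) : nat := \rank (adj01_mx adj).

Definition edge_set (V : finType) (adj : rel V) : {set {set V}} :=
  [set e : {set V} | [exists x, exists y, adj x y && (e == [set x; y])]].

Definition ncomp (V : finType) (adj : rel V) : nat :=
  n_comp (connect adj) (mem (@predT V)).

Definition theta (V : finType) (adj : rel V) : int :=
  (#|edge_set adj|%:Z - #|V|%:Z + (ncomp adj)%:Z)%R.

Definition del_vertex (V : finType) (v : V) := {x : V | x != v}.
Definition del_adj (V : finType) (adj : rel V) (v : V) : rel (del_vertex v) :=
  fun x y => adj (val x) (val y).
Definition del_gain (V : finType) (T : Type) (phi : V -> V -> T) (v : V) :
  del_vertex v -> del_vertex v -> T :=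
  fun x y => phi (val x) (val y).

Definition is_cycle (V : finType) (adj : rel V) (s : seq V) : bool :=
  [&& uniq s, (3 <= size s)%N & cycle adj s].

Definition cycle_edges (V : finType) (s : seq V) : {set V * V} :=
  [set p : V * V | (p.1 \in s) && ((next s p.1 == p.2) || (prev s p.1 == p.2))].

Definition on_cycle (V : finType) (adj : rel V) (v : V) : Prop :=
  exists s : seq V, is_cycle adj s /\ v \in s.

(* v lies on exactly one cycle: all cycles through v have the same edge set
   (a cycle of a simple graph is determined by its edge set) *)
Definition on_unique_cycle (V : finType) (adj : rel V) (v : V) : Prop :=
  on_cycle adj v /\
  forall s1 s2 : seq V, is_cycle adj s1 -> v \in s1 -> is_cycle adj s2 -> v \in s2 ->
    cycle_edges s1 = cycle_edges s2.

Definition degree (V : finType) (adj : rel V) (x : V) : nat := #|[set y | adj x y]|.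

Definition quasi_pendant (V : finType) (adj : rel V) (v : V) : Prop :=
  exists u, adj v u /\ degree adj u = 1%N.

Arguments del_adj {V} adj v.
Arguments del_gain {V T} phi v.

(* Main.v *)
Require Import Defs.
From HB Require Import structures.
From mathcomp Require Import all_boot all_order all_algebra.
From mathcomp Require Import complex.
From mathcomp Require Import reals.
From mathcomp Require Import zify.
Set Implicit Arguments. Unset Strict Implicit. Unset Printing Implicit Defensive.
Import Order.TTheory GRing.Theory Num.Theory.
Local Open Scope ring_scope.
Section RowDel.
Variable K : fieldType.

Lemma rank_rowsub_le m n p (g : 'I_m -> 'I_n) (A : 'M[K]_(n, p)) :
  (\rank (rowsub g A) <= \rank A)%N.
Proof. exact/mxrankS/rowsub_sub. Qed.

Lemma rank_colsub_le m n p (g : 'I_m -> 'I_p) (A : 'M[K]_(n, p)) :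
  (\rank (colsub g A) <= \rank A)%N.
Proof.
rewrite -mxrank_tr -(mxrank_tr A).
have -> : (colsub g A)^T = rowsub g A^T by apply/matrixP=> i j; rewrite !mxE.
exact: rank_rowsub_le.
Qed.

Variables (m n p : nat) (g : 'I_m -> 'I_n) (k : 'I_n).
Hypothesis gsurj : forall i, i != k -> exists j, g j = i.

Lemma rowsub_eqmx (A : 'M[K]_(n, p)) : (A == rowsub g A + row k A)%MS.
Proof.
apply/andP; split.
  apply/row_subP => i; have [->|ik] := eqVneq i k; first exact: addsmxSr.
  have [j <-] := gsurj ik; rewrite -row_rowsub.
  exact: (submx_trans (row_sub _ _) (addsmxSl _ _)).
by rewrite addsmx_sub rowsub_sub row_sub.
Qed.

Lemma rank_rowsub_ge (A : 'M[K]_(n, p)) : (\rank A <= \rank (rowsub g A) + 1)%N.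
Proof.
rewrite (eqmx_rank (rowsub_eqmx A)).
apply: (leq_trans (mxrank_adds_leqif _ _)).
by rewrite leq_add2l rank_leq_row.
Qed.

Lemma rank_rowsub_zero (A : 'M[K]_(n, p)) : row k A = 0 -> \rank A = \rank (rowsub g A).
Proof.
move=> r0; rewrite (eqmx_rank (rowsub_eqmx A)) r0.
by rewrite addsmx0.
Qed.

Lemma rank_rowsub_indep (A : 'M[K]_(n, p)) (c : 'I_p) :
  A k c != 0 -> (forall j, A (g j) c = 0) -> \rank A = (\rank (rowsub g A) + 1)%N.
Proof.
move=> Akc Agc; apply/eqP; rewrite eqn_leq rank_rowsub_ge /=.
rewrite (eqmx_rank (rowsub_eqmx A)) addn1.
have := mxrank_leqif_sup (addsmxSl (rowsub g A) (row k A)).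
move=> [le eq]; rewrite ltn_neqAle le andbT eq.
rewrite addsmx_sub submx_refl /=; apply/negP => /submxP [D hD].
have := congr1 (fun M : 'M[K]_(1,p) => M 0 c) hD; rewrite !mxE.
rewrite (eq_bigr (fun _ => 0)) ?big1 //.
  by move=> e; move/eqP: Akc.
by move=> j _; rewrite !mxE Agc mulr0.
Qed.
End RowDel.
Definition rk (K : fieldType) (V : finType) (M : V -> V -> K) : nat :=
  \rank (\matrix_(i, j) M (enum_val i) (enum_val j) : 'M[K]_#|V|).
Definition delM (K : fieldType) (V : finType) (x : V) (M : V -> V -> K) :
  del_vertex x -> del_vertex x -> K := fun a b => M (val a) (val b).
Arguments delM {K V} x M.

Definition DV (V : finType) (x : V) : finType := del_vertex x.

Section RkDel.
Variables (K : fieldType) (V : finType) (x : V) (M : V -> V -> K).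
Let A : 'M[K]_#|V| := \matrix_(i, j) M (enum_val i) (enum_val j).
Let g (i : 'I_#|DV x|) : 'I_#|V| := enum_rank (val (enum_val i)).
Let k := enum_rank x.

Lemma gsurj : forall i, i != k -> exists j, g j = i.
Proof.
move=> i ik; have H : enum_val i != x.
  by apply: contra ik => /eqP e; rewrite /k -e enum_valK.
exists (enum_rank (Sub (enum_val i) H : del_vertex x)).
by rewrite /g enum_rankK /= enum_valK.
Qed.

Lemma delM_mx : \matrix_(i, j) delM x M (enum_val i) (enum_val j) = mxsub g g A.
Proof. by apply/matrixP => i j; rewrite !mxE /g !enum_rankK. Qed.

Lemma trA_colsub : (colsub g A)^T = rowsub g A^T.
Proof. by apply/matrixP => i j; rewrite !mxE. Qed.

Lemma rk_del_le : (rk (delM x M) <= rk M)%N.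
Proof.
rewrite /rk delM_mx mxsubrc -/A.
exact: leq_trans (rank_rowsub_le _ _) (rank_colsub_le _ _).
Qed.

Lemma rank_colsub_ge : (\rank A <= \rank (colsub g A) + 1)%N.
Proof.
rewrite -mxrank_tr -(mxrank_tr (colsub g A)) trA_colsub.
exact: rank_rowsub_ge gsurj _.
Qed.

Lemma rk_del_ge : (rk M <= rk (delM x M) + 2)%N.
Proof.
rewrite /rk delM_mx mxsubrc -/A.
apply: (leq_trans rank_colsub_ge).
rewrite (_ : 2 = 1 + 1)%N // addnA leq_add2r.
exact: rank_rowsub_ge gsurj _.
Qed.

Lemma rk_del_iso : (forall y, M x y = 0) -> (forall y, M y x = 0) ->
  rk M = rk (delM x M).
Proof.
move=> h1 h2; rewrite /rk delM_mx mxsubrc -/A.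
have -> : \rank A = \rank (colsub g A).
  rewrite -mxrank_tr -(mxrank_tr (colsub g A)) trA_colsub.
  apply: (rank_rowsub_zero gsurj).
  by apply/rowP => j; rewrite !mxE /k enum_rankK h2.
apply: (rank_rowsub_zero gsurj).
by apply/rowP => j; rewrite !mxE /k enum_rankK h1.
Qed.
End RkDel.

Lemma rk_pendant (K : fieldType) (V : finType) (M : V -> V -> K) (u w : V) :
  u != w -> (forall y, (M u y != 0) = (y == w)) -> (forall y, (M y u != 0) = (y == w)) ->
  rk M = (rk (delM w M) + 2)%N.
Proof.
move=> uw h1 h2.
pose A : 'M[K]_#|V| := \matrix_(i, j) M (enum_val i) (enum_val j).
pose g (i : 'I_#|DV w|) : 'I_#|V| := enum_rank (val (enum_val i)).
rewrite /rk delM_mx mxsubrc -/A -/g.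
have gs := gsurj (x:=w).
have -> : \rank A = (\rank (colsub g A) + 1)%N.
  rewrite -mxrank_tr -(mxrank_tr (colsub g A)) trA_colsub.
  apply: (rank_rowsub_indep gs (c := enum_rank u)).
    by rewrite !mxE !enum_rankK h1.
  move=> j; rewrite !mxE !enum_rankK; apply/eqP; rewrite -[_ == 0]negbK h1.
  by rewrite (valP (enum_val j)).
rewrite (_ : 2 = 1 + 1)%N // addnA; congr (_ + _)%N.
apply: (rank_rowsub_indep gs (c := enum_rank (Sub u uw : del_vertex w))).
  by rewrite !mxE /g !enum_rankK /= h2.
move=> j; rewrite !mxE /g !enum_rankK /=; apply/eqP; rewrite -[_ == 0]negbK h2.
by rewrite (valP (enum_val j)).
Qed.

Lemma card_imset_factor (T U W : finType) (f : T -> U) (h : T -> W) (B : {set T}) :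
  {in B &, forall a b, h a = h b -> f a = f b} -> (#|f @: B| <= #|h @: B|)%N.
Proof.
move=> fh; pose P := [set (f y, h y) | y in B].
have -> : f @: B = fst @: P by rewrite -imset_comp.
have -> : h @: B = snd @: P by rewrite -imset_comp.
rewrite (card_in_imset (f:=snd)); first exact: leq_imset_card.
move=> [a1 a2] [b1 b2] /imsetP [y yB [-> ->]] /imsetP [z zB [-> ->]] /= e.
by rewrite e (fh _ _ yB zB e).
Qed.

Lemma card_imset_defect (T U : finType) (f : T -> U) (N S : {set T}) :
  S \subset N -> (#|S| + #|f @: N| <= #|N| + #|f @: S|)%N.
Proof.
move=> sSN.
have eN : N = S :|: (N :\: S).
  by apply/setP => y; rewrite !inE; case: (boolP (y \in S)) => // /(subsetP sSN) ->.
have hc : #|N :\: S| = (#|N| - #|S|)%N by rewrite cardsD (setIidPr sSN).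
have hS : (#|S| <= #|N|)%N by exact: subset_leq_card.
have hfN : f @: N = f @: S :|: f @: (N :\: S) by rewrite {1}eN imsetU.
rewrite hfN.
have h1 := (leq_card_setU (f @: S) (f @: (N :\: S))).1.
have h2 := leq_imset_card f (N :\: S).
rewrite hc in h2; lia.
Qed.

Definition cls (T : finType) (e : rel T) (y : T) : {set T} := [set z | connect e y z].

Lemma connect_connect (T : finType) (e : rel T) : connect (connect e) =2 connect e.
Proof.
move=> x y; apply/idP/idP; last exact: connect1.
move/connectP => [p]; elim: p x => [|z p IH] x /=; first by move=> _ ->; exact: connect0.
by move=> /andP[exz pz] lz; exact: connect_trans exz (IH z pz lz).
Qed.

Lemma cls_eq (T : finType) (e : rel T) : connect_sym e ->
  forall y z, (cls e y == cls e z) = connect e y z.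
Proof.
move=> cs y z; apply/idP/idP.
  move/eqP => h; have : z \in cls e z by rewrite inE connect0.
  by rewrite -h inE.
move=> yz; apply/eqP/setP => w; rewrite !inE; exact: (same_connect cs yz w).
Qed.

Lemma ncomp_cls (T : finType) (e : rel T) : symmetric e ->
  ncomp e = #|[set cls e y | y : T]|.
Proof.
move=> se; have cs : connect_sym e := sym_connect_sym se.
pose e' := connect e.
have ce : connect e' =2 connect e := connect_connect e.
have cs' : connect_sym e' by move=> a b; rewrite !ce cs.
have -> : [set cls e y | y : T] = cls e @: [set x | fingraph.roots e' x].
  apply/setP => c; apply/imsetP/imsetP => [[y _ ->]|[y _ ->]]; last by exists y.
  exists (fingraph.root e' y); first by rewrite inE; exact: roots_root cs' y.
  apply/eqP; rewrite cls_eq // -ce; exact: connect_root.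
rewrite card_in_imset; first by apply: eq_card => y; rewrite !inE andbT.
move=> a b; rewrite !inE => ra rb /eqP; rewrite cls_eq // -ce => /(fingraph.rootP cs') hab.
by rewrite -(eqP ra) -(eqP rb) hab.
Qed.

Definition nbr' (V : finType) (adj : rel V) (x : V) : {set DV x} :=
  [set y : DV x | adj x (val y)].

Section Del.
Variables (V : finType) (adj : rel V) (x : V).
Hypotheses (sadj : symmetric adj) (iadj : irreflexive adj).

Lemma sym_del : symmetric (del_adj adj x).
Proof. by move=> a b; rewrite /del_adj sadj. Qed.
Lemma irr_del : irreflexive (del_adj adj x).
Proof. by move=> a; rewrite /del_adj iadj. Qed.

Lemma card_DV : #|V| = (#|DV x| + 1)%N.
Proof.
rewrite card_sig (cardD1 x) inE addnC; congr (_ + _)%N.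
by apply: eq_card => y; rewrite !inE andbT.
Qed.

Lemma adj_neq y : adj x y -> y != x.
Proof. by apply: contraTneq => ->; rewrite iadj. Qed.

Lemma card_nbr' : #|nbr' adj x| = degree adj x.
Proof.
rewrite /degree -(card_imset _ val_inj); apply: eq_card => y; rewrite [in RHS]inE; apply/imsetP/idP => [[z]|hy].
  by rewrite inE => hz ->.
by exists (Sub y (adj_neq hy)); rewrite ?inE.
Qed.

Lemma edge_count :
  #|edge_set adj| = (#|edge_set (del_adj adj x)| + degree adj x)%N.
Proof.
set E' := edge_set (del_adj adj x).
pose A := [set val @: e | e : {set DV x} in E'].
pose B := [set [set x; y] | y in [set y | adj x y]].
have eE : edge_set adj = A :|: B.
  apply/setP => e; rewrite inE; apply/idP/idP.
    case/existsP => a /existsP [b /andP [hab /eqP ->]].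
    case: (eqVneq a x) => [eax|ax].
      subst a; apply/setUP; right; apply/imsetP; exists b; by rewrite ?inE.
    case: (eqVneq b x) => [ebx|bx].
      subst b; apply/setUP; right; apply/imsetP; exists a; first by rewrite inE sadj.
      by rewrite setUC.
    apply/setUP; left; apply/imsetP; exists [set (Sub a ax : DV x); Sub b bx].
      rewrite inE; apply/existsP; exists (Sub a ax); apply/existsP; exists (Sub b bx).
      by rewrite /del_adj /= hab eqxx.
    by rewrite imsetU1 imset_set1.
  case/setUP => /imsetP [e' he' ->].
    move: he'; rewrite inE => /existsP [a' /existsP [b' /andP [hab /eqP ->]]].
    apply/existsP; exists (val a'); apply/existsP; exists (val b').
    by rewrite [adj _ _]hab imsetU1 imset_set1 eqxx.
  apply/existsP; exists x; apply/existsP; exists e'.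
  by move: he'; rewrite inE => ->; rewrite eqxx.
have dAB : A :&: B = set0.
  apply/setP => e; rewrite !inE; apply/negP => /andP [/imsetP [e' _ ->] /imsetP [y _ he]].
  have : x \in [set val z | z in e'] by rewrite he !inE eqxx.
  by case/imsetP => z _ ezx; move: (valP z); rewrite -ezx eqxx.
rewrite eE cardsU dAB cards0 subn0.
rewrite card_imset; last exact: imset_inj val_inj.
congr (_ + _)%N; rewrite card_in_imset //.
move=> y1 y2; rewrite !inE => h1 h2 e12.
have : y1 \in [set x; y2] by rewrite -e12 !inE eqxx orbT.
by rewrite !inE (negbTE (adj_neq h1)) => /eqP.
Qed.

Lemma comp_count :
  (ncomp (del_adj adj x) + 1 <= ncomp adj + #|cls (del_adj adj x) @: nbr' adj x|)%N.
Proof.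
have sG' := sym_del.
have cs' : connect_sym (del_adj adj x) := sym_connect_sym sG'.
have cs : connect_sym adj := sym_connect_sym sadj.
rewrite !ncomp_cls //.
pose SV := [set cls adj y | y : V].
pose SD := [set cls (del_adj adj x) y | y : DV x].
change (#|SD| + 1 <= #|SV| + #|cls (del_adj adj x) @: nbr' adj x|)%N.
set G' := del_adj adj x.
set f' := cls G'; set f := cls adj.
pose As := [set y : DV x | [exists n in nbr' adj x, connect G' y n]].
have eT : SD = f' @: As :|: f' @: (~: As).
  rewrite -imsetU setUCr; apply/setP => c.
  by apply/imsetP/imsetP => [[y _ ->]|[y _ ->]]; exists y; rewrite ?inE.
have h1 : f' @: As \subset f' @: nbr' adj x.
  apply/subsetP => c /imsetP [y]; rewrite inE => /exists_inP [n nN cyn] ->.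
  by apply/imsetP; exists n => //; apply/eqP; rewrite cls_eq.
have K : forall y, y \in ~: As -> forall z, connect adj (val y) z ->
    exists2 z' : DV x, val z' = z & connect G' y z'.
  move=> y hy z /connectP [p pth ->].
  elim: p y hy pth => [|a p IH] y hy /=; first by move=> _; exists y => //; exact: connect0.
  move=> /andP [ya pa].
  have ax : a != x.
    apply/negP => /eqP eax; move: hy; rewrite !inE => /negP; apply.
    apply/exists_inP; exists y; last exact: connect0.
    by rewrite inE sadj; move: ya; rewrite eax.
  pose a' : DV x := Sub a ax.
  have ha' : a' \in ~: As.
    rewrite !inE; apply/negP => /exists_inP [n nN can].
    move: hy; rewrite !inE => /negP; apply; apply/exists_inP; exists n => //.
    by apply: connect_trans (connect1 _) can.
  have [z' e1 e2] := IH a' ha' pa.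
  by exists z' => //; apply: connect_trans (connect1 _) e2.
have h2 : (#|f' @: ~: As| <= #|(f \o val) @: ~: As|)%N.
  apply: card_imset_factor => a b ha hb /= /eqP; rewrite cls_eq //.
  move=> /(K a ha) [z' /val_inj <- cz].
  by apply/eqP; rewrite cls_eq.
have h3 : ((f \o val) @: (~: As)) \subset (SV :\ f x).
  apply/subsetP => c /imsetP [y hy ->]; rewrite !inE; apply/andP; split.
    apply/negP => /eqP/eqP; rewrite cls_eq // => /(K y hy) [z' zx _].
    by move: (valP z'); rewrite zx eqxx.
  by apply/imsetP; exists (val y).
have h4 := cardsD1 (f x) SV.
rewrite (_ : f x \in _) /= in h4; last by apply/imsetP; exists x.
have h5 := subset_leq_card h1.
have h6 := subset_leq_card h3.
have h7 := (leq_card_setU (f' @: As) (f' @: ~: As)).1.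
rewrite eT.
apply: (leq_trans (leq_add h7 (leqnn 1))).
apply: (leq_trans (leq_add (leq_add h5 (leq_trans h2 h6)) (leqnn 1))).
rewrite h4. set a := #|_|. set b := #|_|. lia.
Qed.

Lemma theta_drop (S : {set DV x}) : S \subset nbr' adj x ->
  (theta (del_adj adj x) + (#|S|)%:Z <= theta adj + (#|cls (del_adj adj x) @: S|)%:Z)%R.
Proof.
move=> sS.
have h1 := edge_count; have h2 := card_DV; have h3 := comp_count.
have h4 := card_imset_defect (cls (del_adj adj x)) sS.
have h5 := card_nbr'.
rewrite /DV in h2.
rewrite /theta. move: h1 h2 h3 h4 h5. set a := #|edge_set adj|. set b:= #|edge_set _|.
set c := #|Specif_sig__canonical__fintype_Finite _|. set d := #|S|. set e := #|nbr' _ _|.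
set f := #|[set _ | _ in S]|. set g := #|[set _ | _ in nbr' _ _]|. lia.
Qed.
End Del.

Section Del2.
Variables (V : finType) (adj : rel V) (x : V).
Hypotheses (sadj : symmetric adj) (iadj : irreflexive adj).

Lemma theta_del_le : (theta (del_adj adj x) <= theta adj)%R.
Proof.
have := theta_drop sadj iadj (sub0set (nbr' adj x)).
by rewrite cards0 imset0 cards0 !addr0.
Qed.

Lemma theta_drop1 (a b : DV x) : a != b -> adj x (val a) -> adj x (val b) ->
  connect (del_adj adj x) a b -> (theta (del_adj adj x) + 1 <= theta adj)%R.
Proof.
move=> ab ha hb cab.
have cs' : connect_sym (del_adj adj x) := sym_connect_sym (sym_del sadj).
have sS : [set a; b] \subset nbr' adj x.
  by apply/subsetP => z; rewrite !inE => /orP [] /eqP ->.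
have := theta_drop sadj iadj sS.
rewrite cards2 ab imsetU1 imset_set1.
have -> : cls (del_adj adj x) b = cls (del_adj adj x) a.
  by apply/eqP; rewrite cls_eq // cs'.
rewrite setUid cards1.
have -> : (2%N : int) = 1 + 1 by [].
by rewrite addrA lerD2r.
Qed.

Lemma theta_drop2 (a1 b1 a2 b2 : DV x) : a1 != b1 -> a2 != b2 ->
  adj x (val a1) -> adj x (val b1) -> adj x (val a2) -> adj x (val b2) ->
  connect (del_adj adj x) a1 b1 -> connect (del_adj adj x) a2 b2 ->
  [set a1; b1] != [set a2; b2] -> (theta (del_adj adj x) + 2 <= theta adj)%R.
Proof.
move=> d1 d2 h1 h2 h3 h4 c1 c2 P12.
have cs' : connect_sym (del_adj adj x) := sym_connect_sym (sym_del sadj).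
set f := cls (del_adj adj x).
set P1 := [set a1; b1]; set P2 := [set a2; b2].
have sS : P1 :|: P2 \subset nbr' adj x.
  by apply/subsetP => z; rewrite !inE => /orP [] /orP [] /eqP ->.
have := theta_drop sadj iadj sS.
have fb1 : f b1 = f a1 by apply/eqP; rewrite cls_eq // cs'.
have fb2 : f b2 = f a2 by apply/eqP; rewrite cls_eq // cs'.
have eS : f @: (P1 :|: P2) = [set f a1; f a2].
  by rewrite imsetU !imsetU1 !imset_set1 fb1 fb2 !setUid.
have cP1 : #|P1| = 2%N by rewrite cards2 d1.
have cP2 : #|P2| = 2%N by rewrite cards2 d2.
have key : (#|f @: (P1 :|: P2)| + 2 <= #|P1 :|: P2|)%N.
  have hU := cardsUI P1 P2.
  rewrite eS cards2; case: (eqVneq (f a1) (f a2)) => [e12|n12] /=.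
    have : (#|P1 :&: P2| <= 1)%N.
      rewrite leqNgt; apply/negP => hI.
      have e1 : P1 :&: P2 = P1.
        apply/eqP; rewrite eqEcard subsetIl cP1; exact: hI.
      have e2 : P1 :&: P2 = P2.
        apply/eqP; rewrite eqEcard subsetIr cP2; exact: hI.
      by move: P12; rewrite -/P1 -/P2 -e1 e2 eqxx.
    move: hU; rewrite cP1 cP2; set u := #|_ :|: _|; set i := #|_ :&: _|; lia.
  have : P1 :&: P2 = set0.
    apply/setP => z; rewrite !inE; apply/negP => /andP [z1 z2].
    have fz1 : f z = f a1 by case/orP: z1 => /eqP ->.
    have fz2 : f z = f a2 by case/orP: z2 => /eqP ->.
    by move: n12; rewrite -fz1 -fz2 eqxx.
  move=> e0; move: hU; rewrite e0 cards0 cP1 cP2; set u := #|_ :|: _|; lia.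
move: key; set s := #|P1 :|: P2|; set t := #|f @: _|; lia.
Qed.

Lemma path_conn (a : DV x) p : path adj (val a) p -> x \notin p ->
  forall z : DV x, val z \in val a :: p -> connect (del_adj adj x) a z.
Proof.
elim: p a => [|c p IH] a /=.
  by move=> _ _ z; rewrite inE => /eqP/val_inj ->; exact: connect0.
move=> /andP [ac pc]; rewrite inE negb_or => /andP [xc xp] z.
rewrite eq_sym in xc.
have cz : connect (del_adj adj x) a (Sub c xc : DV x) by apply: connect1.
rewrite inE => /orP [/eqP/val_inj -> |]; first exact: connect0.
move=> zin; apply: connect_trans cz _; apply: (IH (Sub c xc)) => //=; rewrite ?inE ?zin ?orbT.

Qed.

Lemma cycle_nbrs s : is_cycle adj s -> x \in s ->
  exists a b : DV x, [/\ val a = next s x, val b = prev s x, a != b &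
                       connect (del_adj adj x) a b].
Proof.
case/and3P => us ss cs /rot_to [i q rq].
have cyc : cycle adj (x :: q) by rewrite -rq rot_cycle.
have uq : uniq (x :: q) by rewrite -rq rot_uniq.
have sq : (3 <= size (x :: q))%N by rewrite -rq size_rot.
have en : next s x = next (x :: q) x by rewrite -(next_rot i us) rq.
have ep : prev s x = prev (x :: q) x by rewrite -(prev_rot i us) rq.
case: q => [|c q] in cyc uq sq en ep rq *; first by [].
case: q => [|d q] in cyc uq sq en ep rq *; first by [].
have en' : next s x = c by rewrite en /= eqxx.
have ep' : prev s x = last d q.
  rewrite ep prev_nth mem_head.
  have xq : x \notin [:: c, d & q] by case/andP: uq.
  rewrite (memNindex xq) /=.
  by rewrite -[size q]/((size (d :: q)).-1) nth_last.
move: uq; rewrite /= !inE !negb_or => /and4P [/and3P [xc xd xq] /andP [cd cq] dq uq].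
move: cyc; rewrite /= rcons_path => /and4P [_ acd pdq _].
rewrite eq_sym in xc.
have hl : last d q != x.
  apply/negP => /eqP e; have := mem_last d q; rewrite e inE (negbTE xq) orbF.
  by rewrite (negbTE xd).
exists (Sub c xc), (Sub (last d q) hl); split => //.
  apply/negP => /eqP [] e; have := mem_last d q; rewrite -e inE (negbTE cq) orbF.
  by rewrite (negbTE cd).
apply: (path_conn (a := Sub c xc) (p := d :: q)) => /=.
- by rewrite acd pdq.
- by rewrite inE negb_or xd xq.
- by rewrite inE mem_last orbT.
Qed.
End Del2.

Lemma find_cyc_vertex (V : finType) (adj : rel V) : symmetric adj -> irreflexive adj ->
  (forall y, 1 < degree adj y)%N -> forall x0 : V,
  exists x : V, exists a b : DV x,
    [/\ a != b, adj x (val a), adj x (val b) & connect (del_adj adj x) a b].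
Proof.
move=> sadj iadj dg x0.
have key : forall y q, uniq (y :: q) -> path adj y q ->
    [exists z, adj y z && (z \notin y :: q)] = false ->
    exists x : V, exists a b : DV x,
      [/\ a != b, adj x (val a), adj x (val b) & connect (del_adj adj x) a b].
  move=> y q us ps /negbT nz.
  have allin : forall z, adj y z -> z \in q.
    move=> z hz; have zy : z != y := adj_neq iadj hz.
    have : z \in y :: q.
      apply/negPn/negP => zn; apply: (negP nz); apply/existsP; exists z.
      by rewrite hz zn.
    by rewrite inE (negbTE zy).
  have := dg y; move/card_gt1P => [a [b [ha hb ab]]]; rewrite !inE in ha hb.
  have ain := allin _ ha; have bin := allin _ hb.
  clear nz; case: q => [//|c q] in us ps ain bin allin *.
  move: us ps; rewrite /= inE negb_or => /andP [/andP [yc yq] _] /andP [yc' pcq].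
  rewrite eq_sym in yc.
  have ay := adj_neq iadj ha; have by_ := adj_neq iadj hb.
  pose c' : DV y := Sub c yc.
  have ca : connect (del_adj adj y) c' (Sub a ay).
    by apply: (path_conn (p := q)) => //=; rewrite inE ain orbT.
  have cb : connect (del_adj adj y) c' (Sub b by_).
    by apply: (path_conn (p := q)) => //=; rewrite inE bin orbT.
  exists y, (Sub a ay), (Sub b by_); split => //.
  have cs' : connect_sym (del_adj adj y) := sym_connect_sym (sym_del (x:=y) sadj).
  by apply: connect_trans cb; rewrite cs'.
suff : forall m (s : seq V), (#|V| - size s <= m)%N -> uniq s ->
    path adj (head x0 s) (behead s) -> s != [::] ->
    exists x : V, exists a b : DV x,
      [/\ a != b, adj x (val a), adj x (val b) & connect (del_adj adj x) a b].
  by move/(_ #|V| [:: x0]); apply => //; rewrite leq_subr.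
elim=> [|m IH] [//|y q] hm us ps _.
  case E : [exists z, adj y z && (z \notin y :: q)]; last exact: (key y q us ps E).
  move/existsP: E => [z /andP [yz zn]].
  have uz : uniq (z :: y :: q) by rewrite cons_uniq zn us.
  have := max_card (mem (z :: y :: q)); rewrite (card_uniqP uz) /=.
  move: hm; rewrite /=; lia.
case E : [exists z, adj y z && (z \notin y :: q)]; last exact: (key y q us ps E).
move/existsP: E => [z /andP [yz zn]].
apply: (IH (z :: y :: q)) => //=.
- by move: hm => /=; lia.
- by rewrite zn; exact: us.
- by rewrite sadj yz ps.
Qed.

Theorem rk_bound (K1 K2 : fieldType) : forall n (V : finType) (adj : rel V)
  (M1 : V -> V -> K1) (M2 : V -> V -> K2), #|V| = n ->
  symmetric adj -> irreflexive adj ->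
  (forall a b, (M1 a b != 0) = adj a b) -> (forall a b, (M2 a b != 0) = adj a b) ->
  ((rk M1)%:Z <= (rk M2)%:Z + 2 * theta adj)%R.
Proof.
elim=> [|n IH] V adj M1 M2 hn sadj iadj p1 p2.
  have h1 : (rk M1 <= #|V|)%N by apply: rank_leq_row.
  rewrite /theta hn; move: h1; rewrite hn.
  set a := rk M1; set b := rk M2; set c := #|edge_set adj|; set d := ncomp adj; lia.
have IHx : forall x : V, ((rk (delM x M1))%:Z <= (rk (delM x M2))%:Z +
                          2 * theta (del_adj adj x))%R.
  move=> x; apply: (IH (DV x)) => //.
  - by move: (card_DV x); rewrite hn; lia.
  - exact: sym_del.
  - exact: irr_del.
  - by move=> a b; rewrite /delM p1.
  - by move=> a b; rewrite /delM p2.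
case A : [exists x, (theta (del_adj adj x) + 1 <= theta adj)%R].
  move/existsP: A => [x hx].
  have h1 := rk_del_ge x M1; have h2 := rk_del_le x M2; have h3 := IHx x.
  move: hx h1 h2 h3; set a := rk M1; set b := rk M2; set a' := rk _; set b' := rk _.
  set t := theta adj; set t' := theta _; lia.
case B : [exists x, degree adj x == 0%N].
  move/existsP: B => [x /eqP hx].
  have nx : forall y, adj x y = false.
    move=> y; apply/negbTE/negP => hy.
    have : y \in [set y | adj x y] by rewrite inE.
    by move/cards0_eq: hx => ->; rewrite inE.
  have z1 : forall (K : fieldType) (M : V -> V -> K),
      (forall a b, (M a b != 0) = adj a b) -> rk M = rk (delM x M).
    move=> K M pM; apply: rk_del_iso.
      by move=> y; apply/eqP; rewrite -[_ == 0]negbK pM nx.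
    by move=> y; apply/eqP; rewrite -[_ == 0]negbK pM sadj nx.
  rewrite (z1 _ M1 p1) (z1 _ M2 p2).
  have h3 := IHx x; have h4 := theta_del_le x sadj iadj.
  move: h3 h4; set a' := rk _; set b' := rk _; set t := theta adj; set t' := theta _.
  lia.
case C : [exists u, degree adj u == 1%N].
  move/existsP: C => [u /cards1P [w hw]].
  have huy : forall y, adj u y = (y == w).
    by move=> y; rewrite -in_set1 -hw inE.
  have uw : u != w.
    by apply/eqP => e; have := huy u; rewrite iadj e eqxx.
  have z2 : forall (K : fieldType) (M : V -> V -> K),
      (forall a b, (M a b != 0) = adj a b) -> rk M = (rk (delM w M) + 2)%N.
    move=> K M pM; apply: (rk_pendant uw) => y; first by rewrite pM huy.
    by rewrite pM sadj huy.
  rewrite (z2 _ M1 p1) (z2 _ M2 p2).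
  have h3 := IHx w; have h4 := theta_del_le w sadj iadj.
  move: h3 h4; set a' := rk _; set b' := rk _; set t := theta adj; set t' := theta _.
  lia.
exfalso.
have dg : forall y, (1 < degree adj y)%N.
  move=> y; rewrite ltnNge; apply/negP => hy.
  have : (degree adj y == 0%N) || (degree adj y == 1%N) by move: hy; case: (degree adj y) => [|[|]].
  case/orP => hd.
    by move: B => /negbT/existsP; apply; exists y.
  by move: C => /negbT/existsP; apply; exists y.
have [x0 _] : exists x0 : V, x0 \in V by apply/card_gt0P; rewrite hn.
have [x [a [b [ab ha hb cab]]]] := find_cyc_vertex sadj iadj dg x0.
have := theta_drop1 sadj iadj ab ha hb cab.
by move=> hx; move: A => /negbT/existsP; apply; exists x.
Qed.

Lemma cyc_sub (V : finType) (s1 s2 : seq V) (v : V) : uniq s1 -> v \in s1 -> v \in s2 ->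
  (forall x, x \in s1 -> x \in s2 ->
     [set next s1 x; prev s1 x] = [set next s2 x; prev s2 x]) ->
  {subset s1 <= s2}.
Proof.
move=> us1 v1 v2 hp y y1.
have := fconnect_cycle (cycle_next us1) v1 y; rewrite y1 => /iter_findex <-.
elim: (findex _ v y) => [//|k IH] /=.
set z := iter k _ v in IH *.
have z1 : z \in s1 by rewrite /z; elim: k {IH z} => //= k IHk; rewrite mem_next.
have : next s1 z \in [set next s2 z; prev s2 z] by rewrite -(hp z z1 IH) !inE eqxx.
by rewrite !inE => /orP [] /eqP ->; rewrite ?mem_next ?mem_prev.
Qed.

Lemma cyc_agree (V : finType) (s1 s2 : seq V) (v : V) : uniq s1 -> uniq s2 ->
  v \in s1 -> v \in s2 ->
  (forall x, x \in s1 -> x \in s2 ->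
     [set next s1 x; prev s1 x] = [set next s2 x; prev s2 x]) ->
  cycle_edges s1 = cycle_edges s2.
Proof.
move=> us1 us2 v1 v2 hp.
have h12 := cyc_sub us1 v1 v2 hp.
have h21 : {subset s2 <= s1}.
  by apply: (cyc_sub us2 v2 v1) => x x2 x1; rewrite hp.
apply/setP => [[a b]]; rewrite !inE /=.
case: (boolP (a \in s1)) => a1 /=.
  have a2 := h12 _ a1; rewrite a2 /=.
  have := hp a a1 a2 => /setP /(_ b); rewrite !inE.
  by rewrite ![b == _]eq_sym.
by case: (boolP (a \in s2)) => // /h21; rewrite (negbTE a1).
Qed.

Section Final.
Variables (V : finType) (adj : rel V).
Hypotheses (sadj : symmetric adj) (iadj : irreflexive adj).
Variables (K1 K2 : fieldType) (M1 : V -> V -> K1) (M2 : V -> V -> K2).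
Hypotheses (p1 : forall a b, (M1 a b != 0) = adj a b)
           (p2 : forall a b, (M2 a b != 0) = adj a b).

Lemma pat_del (K : fieldType) (M : V -> V -> K) x :
  (forall a b, (M a b != 0) = adj a b) ->
  forall a b, (delM x M a b != 0) = del_adj adj x a b.
Proof. by move=> pM a b; rewrite /delM pM. Qed.

Lemma bound_del x :
  ((rk (delM x M1))%:Z <= (rk (delM x M2))%:Z + 2 * theta (del_adj adj x))%R /\
  ((rk (delM x M2))%:Z <= (rk (delM x M1))%:Z + 2 * theta (del_adj adj x))%R.
Proof.
split; apply: (rk_bound (n := #|DV x|)) => //; try exact: sym_del; try exact: irr_del;
  exact: pat_del.
Qed.

Lemma core x : (theta (del_adj adj x) + 1 <= theta adj)%R ->
  [/\ (rk M1)%:Z = (rk M2)%:Z - 2 * theta adj ->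
        [/\ rk M1 = rk (delM x M1), (rk (delM x M2))%:Z = (rk M2)%:Z - 2,
            theta adj = theta (del_adj adj x) + 1 &
            (rk (delM x M1))%:Z = (rk (delM x M2))%:Z - 2 * theta (del_adj adj x)]
    & (rk M1)%:Z = (rk M2)%:Z + 2 * theta adj ->
        [/\ rk M1 = (rk (delM x M1) + 2)%N, rk (delM x M2) = rk M2,
            theta adj = theta (del_adj adj x) + 1 &
            (rk (delM x M1))%:Z = (rk (delM x M2))%:Z + 2 * theta (del_adj adj x)]].
Proof.
move=> hx.
have h1 := rk_del_ge x M1; have h2 := rk_del_le x M1.
have h3 := rk_del_ge x M2; have h4 := rk_del_le x M2.
have [h5 h6] := bound_del x.
move: hx h1 h2 h3 h4 h5 h6.
set a := rk M1; set b := rk M2; set a' := rk (delM x M1); set b' := rk (delM x M2).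
set t := theta adj; set t' := theta _.
move=> *; split => ?; split; lia.
Qed.

Lemma cyc_drop x s : is_cycle adj s -> x \in s ->
  (theta (del_adj adj x) + 1 <= theta adj)%R.
Proof.
move=> cs xs; have [a [b [ea eb ab cab]]] := cycle_nbrs cs xs.
case/and3P: cs => _ _ cyc.
apply: (theta_drop1 sadj iadj ab) cab.
  by rewrite ea; apply: next_cycle.
by rewrite eb sadj; apply: prev_cycle.
Qed.

Lemma not_qp v :
  ((rk M1)%:Z = (rk M2)%:Z - 2 * theta adj \/ (rk M1)%:Z = (rk M2)%:Z + 2 * theta adj) ->
  (theta (del_adj adj v) + 1 <= theta adj)%R ->
  ~ quasi_pendant adj v.
Proof.
move=> hc hv [u [vu /eqP/cards1P [w hw]]].
have huy : forall y, adj u y = (y == w).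
  by move=> y; rewrite -in_set1 -hw inE.
have wv : w = v by have := vu; rewrite sadj huy => /eqP.
subst w.
have uv : u != v.
  by apply/eqP => e; have := huy u; rewrite iadj e eqxx.
have z2 : forall (K : fieldType) (M : V -> V -> K),
    (forall a b, (M a b != 0) = adj a b) -> rk M = (rk (delM v M) + 2)%N.
  move=> K M pM; apply: (rk_pendant uv) => y; first by rewrite pM huy.
  by rewrite pM sadj huy.
have e1 := z2 _ M1 p1; have e2 := z2 _ M2 p2.
have [c1 c2] := core hv.
case: hc => hc.
  by have [h _ _ _] := c1 hc; move: h; rewrite e1; lia.
by have [_ h _ _] := c2 hc; move: h; rewrite e2; lia.
Qed.

Lemma uniq_cyc v :
  ((rk M1)%:Z = (rk M2)%:Z - 2 * theta adj \/ (rk M1)%:Z = (rk M2)%:Z + 2 * theta adj) ->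
  on_cycle adj v -> on_unique_cycle adj v.
Proof.
move=> hc oc; split => // s1 s2 c1 v1 c2 v2.
case: (eqVneq (cycle_edges s1) (cycle_edges s2)) => // ne; exfalso.
have [u1 u2] : uniq s1 /\ uniq s2 by case/and3P: c1; case/and3P: c2.
case E : [forall x, (x \in s1) ==> (x \in s2) ==>
             ([set next s1 x; prev s1 x] == [set next s2 x; prev s2 x])].
  move: ne; rewrite (cyc_agree u1 u2 v1 v2) ?eqxx // => x x1 x2.
  by move/forallP: E => /(_ x); rewrite x1 x2 /= => /eqP.
move/negbT: E; rewrite negb_forall => /existsP [x]; rewrite !negb_imply.
case/and3P => x1 x2 nP.
have [a1 [b1 [ea1 eb1 ab1 cab1]]] := cycle_nbrs c1 x1.
have [a2 [b2 [ea2 eb2 ab2 cab2]]] := cycle_nbrs c2 x2.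
have cy1 : cycle adj s1 by case/and3P: c1.
have cy2 : cycle adj s2 by case/and3P: c2.
have hd := theta_drop2 sadj iadj ab1 ab2.
have : (theta (del_adj adj x) + 2 <= theta adj)%R.
  apply: hd cab1 cab2 _.
  - by rewrite ea1; apply: next_cycle.
  - by rewrite eb1 sadj; apply: prev_cycle.
  - by rewrite ea2; apply: next_cycle.
  - by rewrite eb2 sadj; apply: prev_cycle.
  apply: contra nP => /eqP e.
  have := congr1 (fun S : {set DV x} => [set val y | y in S]) e; rewrite /= !imsetU1 !imset_set1.
  by rewrite ea1 eb1 ea2 eb2 => ->.
have [k1 k2] := core (cyc_drop c1 x1).
case: hc => hc.
  by have [_ _ h _] := k1 hc; rewrite h lerD2l.
by have [_ _ h _] := k2 hc; rewrite h lerD2l.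
Qed.
End Final.

Theorem lemma4p1 (R : realType) (V : finType) (adj : rel V)
    (phi : V -> V -> R[i]) (v : V) :
  symmetric adj -> irreflexive adj ->
  (forall x y, adj x y -> `|phi x y| = 1) ->
  (forall x y, adj x y -> phi y x = conjc (phi x y)) ->
  on_cycle adj v ->
  [/\
   (* (i) *)
   ((gain_rank adj phi)%:Z = (graph_rank adj)%:Z - 2 * theta adj ->
      [/\ gain_rank adj phi = gain_rank (del_adj adj v) (del_gain phi v),
          (graph_rank (del_adj adj v))%:Z = (graph_rank adj)%:Z - 2
        & theta adj = theta (del_adj adj v) + 1]),
   (* (ii) *)
   ((gain_rank adj phi)%:Z = (graph_rank adj)%:Z + 2 * theta adj ->
      [/\ gain_rank adj phi = (gain_rank (del_adj adj v) (del_gain phi v) + 2)%N,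
          graph_rank (del_adj adj v) = graph_rank adj
        & theta adj = theta (del_adj adj v) + 1]),
   (* (iii), first case *)
   ((gain_rank adj phi)%:Z = (graph_rank adj)%:Z - 2 * theta adj ->
      [/\ (gain_rank (del_adj adj v) (del_gain phi v))%:Z =
            (graph_rank (del_adj adj v))%:Z - 2 * theta (del_adj adj v),
          on_unique_cycle adj v
        & ~ quasi_pendant adj v])
 & (* (iii), second case *)
   ((gain_rank adj phi)%:Z = (graph_rank adj)%:Z + 2 * theta adj ->
      [/\ (gain_rank (del_adj adj v) (del_gain phi v))%:Z =
            (graph_rank (del_adj adj v))%:Z + 2 * theta (del_adj adj v),
          on_unique_cycle adj v
        & ~ quasi_pendant adj v])].
Proof.
move=> sadj iadj hn _ oc.
pose M1 := fun x y : V => if adj x y then phi x y else 0 : R[i].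
pose M2 := fun x y : V => ((adj x y)%:R : rat).
have p1 : forall a b, (M1 a b != 0) = adj a b.
  move=> a b; rewrite /M1; case: ifP => h; last by rewrite eqxx.
  apply/negP => /eqP e; have := hn a b h; rewrite e normr0 => /eqP.
  by rewrite eq_sym oner_eq0.
have p2 : forall a b, (M2 a b != 0) = adj a b by move=> a b; rewrite /M2; case: (adj a b).
have eG : gain_rank adj phi = rk M1 := erefl.
have eGv : gain_rank (del_adj adj v) (del_gain phi v) = rk (delM v M1) := erefl.
have eH : graph_rank adj = rk M2 := erefl.
have eHv : graph_rank (del_adj adj v) = rk (delM v M2) := erefl.
rewrite eG eGv eH eHv.
have [s [cs vs]] := oc.
have hv := cyc_drop sadj iadj cs vs.
have [c1 c2] := core sadj iadj p1 p2 hv.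
split.
- by move=> h; have [? ? ? _] := c1 h; split.
- by move=> h; have [? ? ? _] := c2 h; split.
- move=> h; have [_ _ _ ?] := c1 h; split => //.
    by apply: (uniq_cyc sadj iadj p1 p2); [left|].
  by apply: (not_qp sadj iadj p1 p2); [left|].
- move=> h; have [_ _ _ ?] := c2 h; split => //.
    by apply: (uniq_cyc sadj iadj p1 p2); [right|].
  by apply: (not_qp sadj iadj p1 p2); [right|].
Qed.
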